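(* Let $\lambda>0$, let $\boldsymbol\alpha^\star$ be the optimal solution of the dual problem $\max_{\boldsymbol\alpha\ge\mathbf0}D_\lambda(\boldsymbol\alpha)$ and $\mathbf m^\star$ the optimal solution of the primal problem $\min_{\mathbf m\ge\mathbf0}P_\lambda(\mathbf m)$. Suppose $\mathbf q\in\mathbb R^{2nK}$ and $r\ge0$ satisfy $\|\boldsymbol\alpha^\star-\mathbf q\|_2^2\le r^2$. Then for every $k\in[p]$, $$\mathbf C_{k,:}\mathbf q+r\|\mathbf C_{k,:}\|_2\le\lambda\ \Longrightarrow\ m_k^\star=0.$$
   Context: Let $n,K,p\ge1$ be integers, $[n]=\{1,\dots,n\}$. For each $i\in[n]$ let $\mathbf x_i\in\mathbb R^p$ have nonnegative entries and let $\mathcal D_i,\mathcal S_i\subseteq[n]$ be sets of size $K$. Put $\mathbf c_{ij}=(\mathbf x_i-\mathbf x_j)\circ(\mathbf x_i-\mathbf x_j)$ (entrywise product). Vectors in $\mathbb R^{2nK}$ are indexed by the pairs $(i,l)$, $l\in\mathcal D_i$ (''different-class pairs'') and $(i,j)$, $j\in\mathcal S_i$ (''same-class pairs''). $\mathbf C\in\mathbb R^{p\times2nK}$ has column $\mathbf c_{il}$ for each different-class pair and $-\mathbf c_{ij}$ for each same-class pair; $\mathbf C_{k,:}$ is its $k$-th row. Fix $L\ge U\ge0$, $\eta>0$; let $\mathbf t\in\mathbb R^{2nK}$ have entry $L$ at different-class pairs and $-U$ at same-class pairs; $\ell_s(x)=([s-x]_+)^2$ with $[z]_+=\max\{z,0\}$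 (entrywise for vectors); $\mathbf1$ is the all-ones vector. For $\lambda>0$ define on $\mathbf m\in\mathbb R^p_{\ge0}$ $$P_\lambda(\mathbf m)=\sum_{i\in[n]}\Big[\sum_{l\in\mathcal D_i}\ell_L(\mathbf m^\top\mathbf c_{il})+\sum_{j\in\mathcal S_i}\ell_{-U}(-\mathbf m^\top\mathbf c_{ij})\Big]+\lambda\Big(\mathbf m^\top\mathbf1+\frac\eta2\|\mathbf m\|_2^2\Big),$$ and on $\boldsymbol\alpha\in\mathbb R^{2nK}_{\ge0}$ $$D_\lambda(\boldsymbol\alpha)=-\frac14\|\boldsymbol\alpha\|_2^2+\mathbf t^\top\boldsymbol\alpha-\frac{\lambda\eta}2\|\mathbf m_\lambda(\boldsymbol\alpha)\|_2^2,\qquad\mathbf m_\lambda(\boldsymbol\alpha)=\frac1{\lambda\eta}[\mathbf C\boldsymbol\alpha-\lambda\mathbf1]_+.$$ *)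

(* Defs.v *)
From HB Require Import structures.
From mathcomp Require Import all_boot all_order all_algebra.
From mathcomp Require Import reals.
Set Implicit Arguments. Unset Strict Implicit. Unset Printing Implicit Defensive.
Import Order.TTheory GRing.Theory Num.Theory.
Local Open Scope ring_scope.

Section Defs.
Variables (R : realType) (n p : nat).
Variables (x : 'I_n -> 'I_p -> R) (Dset Sset : 'I_n -> {set 'I_n}).

(* Index set of R^{2nK}: different-class pairs (i,l), l in D_i, and
   same-class pairs (i,j), j in S_i (kept as disjoint summands). *)
Definition pair_idx : finType :=
  ({i : 'I_n & {l : 'I_n | l \in Dset i}} + {i : 'I_n & {j : 'I_n | j \in Sset i}})%type.

Definition cvec (i j : 'I_n) (k : 'I_p) : R := (x i k - x j k) ^+ 2.

Definition Cmat (k : 'I_p) (a : pair_idx) : R :=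
  match a with
  | inl s => cvec (tag s) (sval (tagged s)) k
  | inr s => - cvec (tag s) (sval (tagged s)) k
  end.

Definition tvec (L U : R) (a : pair_idx) : R :=
  match a with inl _ => L | inr _ => - U end.

Definition ell (s z : R) : R := (Num.max (s - z) 0) ^+ 2.

Definition dotc (m : 'I_p -> R) (i j : 'I_n) : R := \sum_k m k * cvec i j k.

Definition Pobj (L U eta lam : R) (m : 'I_p -> R) : R :=
  \sum_(i : 'I_n) (\sum_(l in Dset i) ell L (dotc m i l)
                   + \sum_(j in Sset i) ell (- U) (- dotc m i j))
  + lam * (\sum_k m k + eta / 2 * \sum_k m k ^+ 2).

Definition mlam (eta lam : R) (alpha : pair_idx -> R) (k : 'I_p) : R :=
  Num.max (\sum_a Cmat k a * alpha a - lam) 0 / (lam * eta).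

Definition Dobj (L U eta lam : R) (alpha : pair_idx -> R) : R :=
  - (1 / 4) * \sum_a alpha a ^+ 2 + \sum_a tvec L U a * alpha a
  - lam * eta / 2 * \sum_k mlam eta lam alpha k ^+ 2.

End Defs.

(* Main.v *)
Require Import Defs.
From HB Require Import structures.
From mathcomp Require Import all_boot all_order all_algebra.
From mathcomp Require Import reals.
From mathcomp Require Import ring lra.
Import Order.TTheory GRing.Theory Num.Theory.
Local Open Scope ring_scope.

Section P.
Variable R : realType.
Implicit Types u v a g m lam eta : R.

Lemma mx_l {u} : 0 <= u -> Num.max u 0 = u.
Proof. move=> h; exact: max_l. Qed.
Lemma mx_r {u} : u <= 0 -> Num.max u 0 = 0.
Proof. move=> h; exact: max_r. Qed.

Lemma mx_ge0 u : 0 <= Num.max u 0.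
Proof. by have [h|h] := leP 0 u. Qed.

Lemma phi_up u v : Num.max v 0 ^+ 2 <= Num.max u 0 ^+ 2 + 2 * Num.max u 0 * (v - u) + (v - u) ^+ 2.
Proof.
have [hu|hu] := leP 0 u; have [hv|hv] := leP 0 v.
- have -> : u ^+ 2 + 2 * u * (v - u) + (v - u) ^+ 2 = v ^+ 2 by ring. by [].
- have -> : u ^+ 2 + 2 * u * (v - u) + (v - u) ^+ 2 = v ^+ 2 by ring.
  rewrite expr2 mul0r; exact: sqr_ge0.
- have -> : 0 ^+ 2 + 2 * 0 * (v - u) + (v - u) ^+ 2 = v ^+ 2 + u * (u - 2 * v) :> R by ring.
  have : 0 <= u * (u - 2 * v) by nra.
  lra.
- have -> : 0 ^+ 2 + 2 * 0 * (v - u) + (v - u) ^+ 2 = (v - u) ^+ 2 :> R by ring.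
  rewrite expr2 mul0r; exact: sqr_ge0.
Qed.

Lemma A_ge0 u a : 0 <= a -> 0 <= Num.max u 0 ^+ 2 - a * u + a ^+ 2 / 4.
Proof.
move=> ha; have [hu|hu] := leP 0 u.
- have -> : u ^+ 2 - a * u + a ^+ 2 / 4 = (u - a / 2) ^+ 2 by field.
  exact: sqr_ge0.
- have : 0 <= a * (- u) by nra.
  have : 0 <= a ^+ 2 by exact: sqr_ge0.
  rewrite (_ : (0:R) ^+ 2 = 0); last by rewrite expr2 mul0r.
  lra.
Qed.

Lemma A_le u a : 0 <= a ->
  Num.max u 0 ^+ 2 - a * u + a ^+ 2 / 4 <= (u - a / 2) * (2 * Num.max u 0 - a).
Proof.
move=> ha; have [hu|hu] := leP 0 u.
- have -> : (u - a / 2) * (2 * u - a) = 2 * (u - a / 2) ^+ 2 by field.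
  have -> : u ^+ 2 - a * u + a ^+ 2 / 4 = (u - a / 2) ^+ 2 by field.
  have := sqr_ge0 (u - a / 2); lra.
- have -> : (u - a / 2) * (2 * 0 - a) = - a * u + a ^+ 2 / 2 by field.
  have : 0 <= a ^+ 2 by exact: sqr_ge0.
  rewrite (_ : (0:R) ^+ 2 = 0); last by rewrite expr2 mul0r.
  lra.
Qed.

Lemma B_lb lam eta g m : 0 < lam -> 0 < eta -> 0 <= m ->
  lam * eta / 2 * ((m - Num.max g 0 / (lam * eta)) ^+ 2) <=
  lam * eta / 2 * m ^+ 2 - g * m + lam * eta / 2 * (Num.max g 0 / (lam * eta)) ^+ 2.
Proof.
move=> hl he hm; have hc : 0 < lam * eta by exact: mulr_gt0.
have [hg|hg] := leP 0 g.
- have e : lam * eta * (g / (lam * eta)) = g by field; lra.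
  set w := g / (lam * eta) in e *.
  rewrite -e; have hh : forall A B : R, A = B -> A <= B by move=> A B ->.
  apply: hh; clearbody w; by field.
- rewrite mul0r; nra.
Qed.

Lemma B_eq lam eta g : 0 < lam -> 0 < eta ->
  lam * eta / 2 * (Num.max g 0 / (lam * eta)) ^+ 2 - g * (Num.max g 0 / (lam * eta))
   + lam * eta / 2 * (Num.max g 0 / (lam * eta)) ^+ 2 = 0.
Proof.
move=> hl he; have hc : 0 < lam * eta by exact: mulr_gt0.
have [hg|hg] := leP 0 g.
- field; lra.
- rewrite mul0r; ring.
Qed.
End P.
Section H.
Variables (R : realType) (n p : nat) (x : 'I_n -> 'I_p -> R) (Dset Sset : 'I_n -> {set 'I_n}).
Local Notation I := (pair_idx Dset Sset).
Local Notation C := (@Cmat R n p x Dset Sset).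

Definition Cm (m : 'I_p -> R) (a : I) := \sum_k C k a * m k.
Definition Ca (al : I -> R) (k : 'I_p) := \sum_a C k a * al a.

Lemma loss_eq L U (m : 'I_p -> R) :
  \sum_(i : 'I_n) (\sum_(l in Dset i) ell L (dotc x m i l)
                   + \sum_(j in Sset i) ell (- U) (- dotc x m i j))
  = \sum_a ell (tvec L U a) (Cm m a).
Proof.
rewrite big_split /= big_sumType /=; congr (_ + _).
- rewrite (eq_bigr (fun s => ell L (dotc x m (tag s) (sval (tagged s))))); last first.
    move=> s _; congr ell; rewrite /Cm /dotc; apply: eq_bigr => k _ /=; exact: mulrC.
  rewrite -(sig_big_dep xpredT (fun _ => xpredT) (fun i (j : {l : 'I_n | l \in Dset i}) => ell L (dotc x m i (val j)))).
  apply: eq_bigr => i _; exact: big_sub.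
- rewrite (eq_bigr (fun s => ell (-U) (- dotc x m (tag s) (sval (tagged s))))); last first.
    move=> s _; congr ell; rewrite /Cm /dotc -sumrN; apply: eq_bigr => k _ /=; by rewrite mulNr mulrC.
  rewrite -(sig_big_dep xpredT (fun _ => xpredT) (fun i (j : {l : 'I_n | l \in Sset i}) => ell (-U) (- dotc x m i (val j)))).
  apply: eq_bigr => i _; exact: big_sub.
Qed.

Lemma exch (f : I -> R) (m : 'I_p -> R) :
  \sum_a f a * Cm m a = \sum_k m k * Ca f k.
Proof.
rewrite /Cm /Ca.
under eq_bigr do rewrite mulr_sumr.
rewrite exchange_big /=; apply: eq_bigr => k _; rewrite mulr_sumr.
apply: eq_bigr => a _; rewrite mulrCA mulrA [m k * _]mulrC -mulrA mulrC; done.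
Qed.

Variables (L U eta lam : R).
Hypotheses (hl : 0 < lam) (he : 0 < eta).
Local Notation t := (@tvec R n Dset Sset L U).
Local Notation P := (Pobj x Dset Sset L U eta lam).
Local Notation D := (@Dobj R n p x Dset Sset L U eta lam).
Local Notation mh := (@mlam R n p x Dset Sset eta lam).

Lemma PD_id (m : 'I_p -> R) (al : I -> R) :
  P m - D al = \sum_a (ell (t a) (Cm m a) - t a * al a + al a * Cm m a + al a ^+ 2 / 4)
   + \sum_k (lam * eta / 2 * m k ^+ 2 - m k * Ca al k + lam * m k + lam * eta / 2 * mh al k ^+ 2).
Proof.
rewrite /Pobj loss_eq /Dobj !big_split /= !sumrN -!mulr_sumr -!mulr_suml exch.
rewrite /Ca; ring.
Qed.

Lemma Ca_lin (al d : I -> R) (e : R) k : Ca (fun a => al a + e * d a) k = Ca al k + e * Ca d k.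
Proof. rewrite /Ca mulr_sumr -big_split; apply: eq_bigr => a _ /=; ring. Qed.

Lemma mh_up (al d : I -> R) (e : R) k :
  mh (fun a => al a + e * d a) k ^+ 2 <=
  mh al k ^+ 2 + 2 * e / (lam * eta) * (mh al k * Ca d k) + e ^+ 2 / (lam * eta) ^+ 2 * Ca d k ^+ 2.
Proof.
have hc : 0 < lam * eta by exact: mulr_gt0.
rewrite /mlam -/(Ca _ k) -/(Ca al k) Ca_lin.
set u := Ca al k - lam.
have -> : Ca al k + e * Ca d k - lam = u + e * Ca d k by rewrite /u; ring.
have h := phi_up _ u (u + e * Ca d k).
set A := Num.max (u + e * Ca d k) 0 in h *; set B := Num.max u 0 in h *.
rewrite -subr_ge0.
have -> : (B / (lam * eta)) ^+ 2 + 2 * e / (lam * eta) * (B / (lam * eta) * Ca d k) +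
   e ^+ 2 / (lam * eta) ^+ 2 * Ca d k ^+ 2 - (A / (lam * eta)) ^+ 2 =
   (B ^+ 2 + 2 * B * (u + e * Ca d k - u) + (u + e * Ca d k - u) ^+ 2 - A ^+ 2) / (lam * eta) ^+ 2.
  by clearbody A B u; field; rewrite !gt_eqF.
apply: divr_ge0; last exact: sqr_ge0.
by rewrite subr_ge0.
Qed.

Lemma D_pert (al d : I -> R) (e : R) : 0 <= e ->
  e * (\sum_a (t a - Cm (mh al) a - al a / 2) * d a)
  - e ^+ 2 * ((\sum_a d a ^+ 2) / 4 + (\sum_k Ca d k ^+ 2) / (2 * (lam * eta)))
  <= D (fun a => al a + e * d a) - D al.
Proof.
move=> e0; have hc : 0 < lam * eta by exact: mulr_gt0.
have h1 : \sum_a (al a + e * d a) ^+ 2 =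
   \sum_a al a ^+ 2 + 2 * e * \sum_a al a * d a + e ^+ 2 * \sum_a d a ^+ 2.
  rewrite !mulr_sumr -!big_split; apply: eq_bigr => a _ /=; ring.
have h2 : \sum_a t a * (al a + e * d a) = \sum_a t a * al a + e * \sum_a t a * d a.
  rewrite !mulr_sumr -!big_split; apply: eq_bigr => a _ /=; ring.
have h3 : \sum_k mh (fun a => al a + e * d a) k ^+ 2 <=
   \sum_k mh al k ^+ 2 + 2 * e / (lam * eta) * \sum_k mh al k * Ca d k
   + e ^+ 2 / (lam * eta) ^+ 2 * \sum_k Ca d k ^+ 2.
  rewrite !mulr_sumr -!big_split; apply: ler_sum => k _ /=; exact: mh_up.
have h4 : \sum_a (t a - Cm (mh al) a - al a / 2) * d a =
   \sum_a t a * d a - \sum_k mh al k * Ca d k - (\sum_a al a * d a) / 2.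
  rewrite -exch.
  have -> : (\sum_a al a * d a) / 2 = \sum_a (al a * d a / 2) by rewrite mulr_suml.
  rewrite -!sumrB; apply: eq_bigr => a _ /=; ring.
have h5 := ler_wpM2l (x := lam * eta / 2) ltac:(apply: divr_ge0; [exact: ltW|by []]) h3.
rewrite -subr_ge0 /Dobj h1 h2 h4.
set X := \sum_k mh al k * Ca d k in h5 *.
set Y := \sum_k Ca d k ^+ 2 in h5 *.
set M1 := \sum_k mh al k ^+ 2 in h5 *.
set M2 := \sum_k mh (fun a => al a + e * d a) k ^+ 2 in h5 *.
rewrite -subr_ge0 in h5.
apply: (le_trans h5).
have hh : forall A B : R, A = B -> A <= B by move=> A B ->.
apply: hh; clearbody X Y M1 M2.
field; rewrite !gt_eqF //.
Qed.

Lemma kkt (al : I -> R) : (forall a, 0 <= al a) ->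
  (forall beta : I -> R, (forall a, 0 <= beta a) -> D beta <= D al) ->
  \sum_a (t a - Cm (mh al) a - al a / 2) * (2 * Num.max (t a - Cm (mh al) a) 0 - al a) <= 0.
Proof.
move=> hal hopt.
pose d := fun a => 2 * Num.max (t a - Cm (mh al) a) 0 - al a.
have := D_pert al d.
rewrite -/(d _).
set S := \sum_a _ * d a.
set M := (_ / 4 + _ / _) => hp.
have M0 : 0 <= M.
  have hc : 0 < lam * eta by exact: mulr_gt0.
  rewrite /M; apply: addr_ge0; apply: divr_ge0; try (apply: sumr_ge0 => i _; exact: sqr_ge0).
  - by [].
  - by apply: mulr_ge0; [|exact: ltW].
rewrite leNgt; apply/negP => hS.
pose e := S / (S + M).
have hSM : 0 < S + M by lra.
have e0 : 0 < e by apply: divr_gt0.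
have e1 : e <= 1 by rewrite ler_pdivrMr // mul1r; lra.
have hfeas : forall a, 0 <= al a + e * d a.
  move=> a; rewrite /d; have := mx_ge0 _ (t a - Cm (mh al) a); have := hal a; nra.
have h1 := hp e (ltW e0).
have h2 := hopt _ hfeas.
have ee : e * (S + M) = S by rewrite /e; field; rewrite gt_eqF.
have h3 : e * S - e ^+ 2 * M = e ^+ 2 * S.
  rewrite -{1}ee; ring.
have h4 : 0 < e ^+ 2 * S by apply: mulr_gt0 => //; exact: exprn_gt0.
lra.
Qed.

Lemma P_mh_le (al : I -> R) : (forall a, 0 <= al a) ->
  (forall beta : I -> R, (forall a, 0 <= beta a) -> D beta <= D al) ->
  P (mh al) <= D al.
Proof.
move=> hal hopt; rewrite -subr_le0 PD_id.
have hB : \sum_k (lam * eta / 2 * mh al k ^+ 2 - mh al k * Ca al k + lam * mh al k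
    + lam * eta / 2 * mh al k ^+ 2) = 0.
  apply: big1 => k _; have := B_eq _ _ _ (Ca al k - lam) hl he.
  rewrite /mlam -/(Ca al k); lra.
rewrite hB addr0; apply: le_trans; last exact: (kkt _ hal hopt).
apply: ler_sum => a _.
have := A_le _ (t a - Cm (mh al) a) (al a) (hal a).
rewrite /ell; lra.
Qed.

Lemma P_lb (m : 'I_p -> R) (al : I -> R) : (forall k, 0 <= m k) -> (forall a, 0 <= al a) ->
  \sum_k lam * eta / 2 * (m k - mh al k) ^+ 2 <= P m - D al.
Proof.
move=> hm hal; rewrite PD_id -[X in X <= _]add0r; apply: lerD.
  apply: sumr_ge0 => a _; have := A_ge0 _ (t a - Cm m a) (al a) (hal a); rewrite /ell; lra.
apply: ler_sum => k _; have := B_lb _ _ _ (Ca al k - lam) (m k) hl he (hm k).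
rewrite /mlam -/(Ca al k); lra.
Qed.
End H.

Section CS.
Variables (R : realType) (I : finType).

Lemma zero_c (c e : I -> R) : \sum_a c a ^+ 2 = 0 -> \sum_a c a * e a = 0.
Proof.
move=> h; apply: big1 => a _.
have := psumr_eq0P (fun a _ => sqr_ge0 (c a)) h (i:=a) isT.
by move/eqP; rewrite sqrf_eq0 => /eqP ->; rewrite mul0r.
Qed.

Lemma cs (c e : I -> R) r : 0 <= r -> \sum_a e a ^+ 2 <= r ^+ 2 ->
  \sum_a c a * e a <= r * Num.sqrt (\sum_a c a ^+ 2).
Proof.
move=> hr he.
have hc0 : 0 <= \sum_a c a ^+ 2 by apply: sumr_ge0 => a _; exact: sqr_ge0.
have he0 : 0 <= \sum_a e a ^+ 2 by apply: sumr_ge0 => a _; exact: sqr_ge0.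
have hs2 := sqr_sqrtr hc0; have hw2 := sqr_sqrtr he0.
have s0 := sqrtr_ge0 (\sum_a c a ^+ 2); have w0 := sqrtr_ge0 (\sum_a e a ^+ 2).
set s := Num.sqrt (\sum_a c a ^+ 2) in hs2 s0 *.
set w := Num.sqrt (\sum_a e a ^+ 2) in hw2 w0.
have wr : w <= r by nra.
suff key : \sum_a c a * e a <= s * w by nra.
have [sz|sp] := eqVneq s 0.
  rewrite zero_c; first by rewrite sz mul0r.
  by rewrite -hs2 sz expr2 mul0r.
have [wz|wp] := eqVneq w 0.
  under eq_bigr do rewrite mulrC.
  rewrite zero_c; first by rewrite wz mulr0.
  by rewrite -hw2 wz expr2 mul0r.
have sp' : 0 < s by rewrite lt_def sp s0.
have wp' : 0 < w by rewrite lt_def wp w0.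
have hid : \sum_a (c a * w - e a * s) ^+ 2 =
   w ^+ 2 * \sum_a c a ^+ 2 - 2 * w * s * \sum_a c a * e a + s ^+ 2 * \sum_a e a ^+ 2.
  rewrite !mulr_sumr -sumrB -big_split; apply: eq_bigr => a _ /=; ring.
have hpos : 0 <= \sum_a (c a * w - e a * s) ^+ 2 by apply: sumr_ge0 => a _; exact: sqr_ge0.
rewrite hid hs2 hw2 in hpos.
have hsw : 0 < s * w by exact: mulr_gt0.
nra.
Qed.
End CS.


Theorem theorem4 (R : realType) (n K p : nat)
  (x : 'I_n -> 'I_p -> R) (Dset Sset : 'I_n -> {set 'I_n})
  (L U eta lam : R)
  (alpha_star : pair_idx Dset Sset -> R) (m_star : 'I_p -> R)
  (q : pair_idx Dset Sset -> R) (r : R) :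
  (1 <= n)%N -> (1 <= K)%N -> (1 <= p)%N ->
  (forall i k, 0 <= x i k) ->
  (forall i, #|Dset i| = K) -> (forall i, #|Sset i| = K) ->
  0 <= U -> U <= L -> 0 < eta -> 0 < lam ->
  (* alpha_star is an optimal solution of max_{alpha >= 0} D_lam(alpha) *)
  (forall a, 0 <= alpha_star a) ->
  (forall beta : pair_idx Dset Sset -> R, (forall a, 0 <= beta a) ->
     @Dobj R n p x Dset Sset L U eta lam beta <= @Dobj R n p x Dset Sset L U eta lam alpha_star) ->
  (* m_star is an optimal solution of min_{m >= 0} P_lam(m) *)
  (forall k, 0 <= m_star k) ->
  (forall m : 'I_p -> R, (forall k, 0 <= m k) ->
     Pobj x Dset Sset L U eta lam m_star <= Pobj x Dset Sset L U eta lam m) ->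
  0 <= r ->
  \sum_a (alpha_star a - q a) ^+ 2 <= r ^+ 2 ->
  forall k : 'I_p,
    \sum_a @Cmat R n p x Dset Sset k a * q a + r * Num.sqrt (\sum_a @Cmat R n p x Dset Sset k a ^+ 2) <= lam ->
    m_star k = 0.
Proof.
move=> _ _ _ _ _ _ hU hUL he hl hal hopt hm hmopt hr hq k hk.
pose mh := mlam x eta lam alpha_star.
have hc : 0 < lam * eta by exact: mulr_gt0.
have hmh0 : forall k, 0 <= mh k.
  move=> k'; apply: divr_ge0; [exact: mx_ge0 | exact: ltW].
have h1 := P_mh_le _ _ _ x Dset Sset L U eta lam hl he _ hal hopt.
have h2 := hmopt mh hmh0.
have h3 := P_lb _ _ _ x Dset Sset L U eta lam hl he _ _ hm hal.
have hk1 : lam * eta / 2 * (m_star k - mh k) ^+ 2 <=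
    \sum_k lam * eta / 2 * (m_star k - mlam x eta lam alpha_star k) ^+ 2.
  rewrite (bigD1 k) //= lerDl; apply: sumr_ge0 => i _.
  apply: mulr_ge0; [apply: divr_ge0; [exact: ltW|by []] | exact: sqr_ge0].
have hsq : (m_star k - mh k) ^+ 2 = 0.
  apply/eqP; rewrite eq_le sqr_ge0 andbT.
  have hc2 : 0 < lam * eta / 2 by apply: divr_gt0.
  rewrite -(pmulr_rle0 _ hc2); rewrite /mh in hk1 *; lra.
move/eqP: hsq; rewrite sqrf_eq0 subr_eq0 => /eqP ->.
rewrite /mh /mlam.
have hCS := cs _ _ (fun a => Cmat x k a) (fun a => alpha_star a - q a) r hr hq.
have hsplit : \sum_a Cmat x k a * alpha_star a =
   \sum_a Cmat x k a * q a + \sum_a Cmat x k a * (alpha_star a - q a).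
  rewrite -big_split; apply: eq_bigr => a _ /=; ring.
rewrite mx_r; first by rewrite mul0r.
rewrite hsplit; simpl in hCS; lra.
Qed.
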